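(* Let $K\ge1$ and $m$ be positive integers, and for $k=1,\dots,K$ fix $\sigma_k^2>0$, $\lambda_k\in[0,1)$ and $\theta_k>0$ with $\sum_k\theta_k=1$. For $\gamma>0$ set $\Omega_k=\frac{\gamma\theta_k\sigma_k^2(1-\lambda_k^2)}{m}$, and for $\boldsymbol\ell=(\ell_1,\dots,\ell_K)\in\mathbb N_0^K$ let $F_{\mathcal A_{\boldsymbol\ell}}$ denote the CDF of $\prod_{k=1}^K(1+R_{\boldsymbol\ell,k})$ where $R_{\boldsymbol\ell,1},\dots,R_{\boldsymbol\ell,K}$ are independent with $R_{\boldsymbol\ell,k}\sim\mathcal G(m+\ell_k,\Omega_k)$ (so $F_{\mathcal A_{\boldsymbol\ell}}$ depends on $\gamma$). Then for every fixed $x>1$ and every $\boldsymbol\ell\in\mathbb N_0^K$ with $\boldsymbol\ell\ne\mathbf 0$, $$\lim_{\gamma\to\infty}\frac{F_{\mathcal A_{\boldsymbol\ell}}(x)}{F_{\mathcal A_{\mathbf 0}}(x)}=0,$$ i.e. $F_{\mathcal A_{\boldsymbol\ell}}(x)/F_{\mathcal A_{\mathbf 0}}(x)=o(1)$ as $\gamma\to\infty$.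
   Context: $\mathcal G(a,b)$ denotes the Gamma distribution with shape $a$ and scale $b$ (density $x^{a-1}e^{-x/b}/(\Gamma(a)b^a)$, $x>0$). *)

(* Defs.v *)
From HB Require Import structures.
From mathcomp Require Import all_boot all_order all_algebra.
From mathcomp Require Import all_classical all_reals all_analysis.
Set Implicit Arguments. Unset Strict Implicit. Unset Printing Implicit Defensive.
Import Order.TTheory GRing.Theory Num.Theory.
Import numFieldNormedType.Exports.
Local Open Scope classical_set_scope.
Local Open Scope ring_scope.

Definition gamma_pdf {R : realType} (a : nat) (b : R) (r : R) : R :=
  if 0 < r then r ^+ a.-1 * expR (- r / b) / ((a.-1)`!%:R * b ^+ a) else 0.

(* P( acc * prod_k (1 + R_k) <= x ) for independent R_k with densities fs,
   written as the iterated (Fubini) Lebesgue integral of the indicator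
   against the product density. *)
Fixpoint prod_cdf_aux {R : realType} (fs : seq (R -> R)) (acc x : R) : R :=
  match fs with
  | [::] => if acc <= x then 1 else 0
  | f :: fs' =>
      Rintegral (@lebesgue_measure R) `]0%R, +oo[
        (fun r => f r * prod_cdf_aux fs' (acc * (1 + r)) x)
  end.

Definition prod_cdf {R : realType} (fs : seq (R -> R)) (x : R) : R :=
  prod_cdf_aux fs 1 x.

Definition Omega {R : realType} (K m : nat) (sigma2 lambda theta : 'I_K -> R)
  (gam : R) (k : 'I_K) : R :=
  gam * theta k * sigma2 k * (1 - lambda k ^+ 2) / m%:R.

Definition F_A {R : realType} (K m : nat) (sigma2 lambda theta : 'I_K -> R)
  (ell : 'I_K -> nat) (gam : R) (x : R) : R :=
  prod_cdf [seq gamma_pdf (m + ell k) (Omega m sigma2 lambda theta gam k)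
           | k <- enum 'I_K] x.

(* Main.v *)
Set Warnings "-all".
Require Import Defs.
From HB Require Import structures.
From mathcomp Require Import all_boot all_order all_algebra.
From mathcomp Require Import all_classical all_reals all_analysis.
From mathcomp Require Import measurable_realfun.
From mathcomp Require Import ring lra.
Import Order.TTheory GRing.Theory Num.Theory.
Import numFieldNormedType.Exports.
Local Open Scope classical_set_scope.
Local Open Scope ring_scope.

Section Aux.
Variable R : realType.
Variable x : R.
Hypothesis x1 : 1 < x.

Local Notation D := ([set` `]0%R, +oo[] : set R).
Local Notation mu := (@lebesgue_measure R).

Lemma inD r : D r <-> 0 < r.
Proof. by rewrite /= in_itv /= andbT. Qed.

Lemma mD : measurable (D : set (measurableTypeR R)).
Proof. exact: measurable_itv. Qed.

Definition good (f : R -> R) :=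
  measurable_fun D f /\ (forall r, 0 < r -> 0 <= f r) /\
  exists M, forall r, 0 < r -> r <= x -> f r <= M.

Lemma h_int f (phi : R -> R) : good f ->
  (forall r, 0 < r -> 0 <= phi r) -> (forall r, 0 < r -> x < r -> phi r = 0) ->
  (exists U, forall r, 0 < r -> phi r <= U) -> measurable_fun D phi ->
  mu.-integrable D (EFin \o (fun r => f r * phi r)).
Proof.
move=> [mf [f0 [M hM]]] phi0 phiz [U hU] mphi.
have M0 : 0 <= M by apply: le_trans (f0 1 ltr01) (hM 1 ltr01 (ltW x1)).
have U0 : 0 <= U by apply: le_trans (phi0 1 ltr01) (hU 1 ltr01).
have hi2 : mu.-integrable D (EFin \o \1_(`[0%R, x]%classic)).
  apply/integrableP; split.
    by apply/measurable_EFinP; apply: measurable_indic => //.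
  under eq_integral do rewrite gee0_abs ?lee_fin //.
  rewrite /comp integral_indic //.
  apply: (@le_lt_trans _ _ (mu `[0%R, x]%classic)).
    by apply: measureIl => //; exact: measurable_itv.
  by rewrite lebesgue_measure_itv /= lte_fin (lt_trans ltr01 x1) ltry.
have hi3 := integrableZl mD (M * U) hi2.
apply: (le_integrable mD _ _ hi3).
  by apply/measurable_EFinP; apply: measurable_funM.
move=> r /inD r0 /=.
rewrite lee_fin !ger0_norm ?mulr_ge0 ?f0 ?phi0 //.
have [rx|xr] := leP r x.
  rewrite indicE mem_set ?mulr1; last by rewrite /= in_itv /= (ltW r0) rx.
  by apply: ler_pM => //; [exact: f0|exact: phi0|exact: hM|exact: hU].
by rewrite phiz // mulr0 mulr_ge0 // ?mulr_ge0.
Qed.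


Fixpoint allgood (fs : seq (R -> R)) : Prop :=
  match fs with [::] => True | f :: fs' => good f /\ allgood fs' end.

Lemma ge1M (a r : R) : 1 <= a -> 0 < r -> 1 <= a * (1 + r).
Proof.
move=> a1 r0; apply: (le_trans a1); rewrite -[X in X <= _]mulr1 ler_wpM2l ?lerDl ?ltW //.
exact: lt_le_trans ltr01 a1.
Qed.

Lemma phi_meas (g : R -> R) (acc : R) : 1 <= acc ->
  (forall a b, 1 <= a -> a <= b -> g b <= g a) ->
  measurable_fun D (fun r => g (acc * (1 + r))).
Proof.
move=> acc1 gmon.
have mg : measurable_fun D (fun r => g (acc * (1 + Num.max r 0))); last first.
  apply: eq_measurable_fun mg.
  by move=> r /[!inE] /inD r0; rewrite max_l // ltW.
apply: nonincreasing_measurable; first exact: measurable_itv.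
move=> r s rs; apply: gmon.
  apply: (le_trans acc1); rewrite -[X in X <= _]mulr1 ler_wpM2l ?lerDl ?le_max ?lexx ?orbT //.
  exact: le_trans ler01 acc1.
apply: ler_wpM2l; first exact: le_trans ler01 acc1.
rewrite lerD2l ge_max !le_max.
by rewrite rs lexx orbT.
Qed.

Lemma aux_props fs : allgood fs ->
  (forall acc, 1 <= acc -> 0 <= prod_cdf_aux fs acc x) /\
  (forall acc, x < acc -> prod_cdf_aux fs acc x = 0) /\
  (forall a b, 1 <= a -> a <= b -> prod_cdf_aux fs b x <= prod_cdf_aux fs a x).
Proof.
elim: fs => [|f fs IH] /=.
  move=> _; split; first by move=> acc _; case: ifP => _; rewrite ?ler01.
  split; first by move=> acc xa; case: ifP => // ax; move: (lt_le_trans xa ax); rewrite ltxx.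
  move=> a b _ ab; case: ifP => bx; first by rewrite (le_trans ab bx).
  by case: ifP => _; rewrite ?ler01.
move=> [gf /IH [P1 [P2 P3]]].
have [mf [f0 _]] := gf.
have phi0 acc r : 1 <= acc -> 0 < r -> 0 <= prod_cdf_aux fs (acc * (1 + r)) x.
  by move=> a1 r0; apply: P1; exact: ge1M.
have hI acc : 1 <= acc ->
    lebesgue_measure.-integrable D
      (EFin \o (fun r => f r * prod_cdf_aux fs (acc * (1 + r)) x)).
  move=> a1; apply: h_int => //.
  - by move=> r r0; exact: phi0.
  - move=> r r0 xr; apply: P2; apply: (lt_le_trans xr).
    apply: (@le_trans _ _ (1 + r)); first by rewrite lerDr ler01.
    rewrite -[X in X <= _]mul1r; apply: ler_wpM2r => //.
    by rewrite addr_ge0 ?ler01 ?ltW.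
  - exists (prod_cdf_aux fs 1 x) => r r0; apply: P3 => //; exact: ge1M.
  - exact: (@phi_meas (fun a => prod_cdf_aux fs a x)).

split.
  move=> acc a1; apply: Rintegral_ge0 => r /inD r0.
  by apply: mulr_ge0; [exact: f0|exact: phi0].
split.
  move=> acc xa.
  rewrite (@eq_Rintegral _ _ _ _ _ (fun=> 0)); first by rewrite Rintegral_cst ?mul0r //; exact: mD.
  move=> r /[!inE] /inD r0; rewrite P2 ?mulr0 //.
  apply: (lt_le_trans xa); rewrite -[X in X <= _]mulr1; apply: ler_wpM2l.
    by apply: le_trans (ltW xa); apply: le_trans (ltW x1); rewrite ler01.
  by rewrite lerDl ltW.
move=> a b a1 ab.
apply: le_Rintegral; [exact: mD|exact: hI (le_trans a1 ab)|exact: hI|].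
move=> r /inD r0; apply: ler_wpM2l; first exact: f0.
apply: P3; first exact: ge1M.
apply: ler_wpM2r => //; by rewrite addr_ge0 ?ler01 ?ltW.
Qed.


Lemma lt_accr (acc r : R) : 1 <= acc -> 0 < r -> x < r -> x < acc * (1 + r).
Proof.
move=> a1 r0 xr; apply: (lt_le_trans xr).
apply: (@le_trans _ _ (1 + r)); first by rewrite lerDr ler01.
rewrite -[X in X <= _]mul1r; apply: ler_wpM2r => //.
by rewrite addr_ge0 ?ler01 ?ltW.
Qed.

Lemma hI_lem f fs (acc : R) : good f -> allgood fs -> 1 <= acc ->
  lebesgue_measure.-integrable D
      (EFin \o (fun r => f r * prod_cdf_aux fs (acc * (1 + r)) x)).
Proof.
move=> gf /aux_props [P1 [P2 P3]] a1; apply: h_int => //.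
- by move=> r r0; apply: P1; exact: ge1M.
- by move=> r r0 xr; apply: P2; exact: lt_accr.
- exists (prod_cdf_aux fs 1 x) => r r0; apply: P3 => //; exact: ge1M.
- exact: (@phi_meas (fun a => prod_cdf_aux fs a x)).
Qed.

Lemma allgood_map (T : Type) (F : T -> R -> R) (s : seq T) :
  (forall k, good (F k)) -> allgood (map F s).
Proof. by move=> gF; elim: s => //= k s ->; split. Qed.

Lemma aux_cmp (T : Type) (F G : T -> R -> R) (C : T -> R) (s : seq T) :
  (forall k, good (F k)) -> (forall k, good (G k)) -> (forall k, 0 <= C k) ->
  (forall k r, 0 < r -> r <= x -> F k r <= C k * G k r) ->
  forall acc, 1 <= acc ->
  prod_cdf_aux (map F s) acc x <=
    (\prod_(k <- s) C k) * prod_cdf_aux (map G s) acc x.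
Proof.
move=> gF gG C0 FG; elim: s => [|k s IH] acc a1.
  by rewrite big_nil mul1r.
rewrite big_cons /=.
have agF := @allgood_map T F s gF; have agG := @allgood_map T G s gG.
have [P1F [P2F _]] := aux_props _ agF.
have [P1G [P2G _]] := aux_props _ agG.
have hIF := hI_lem _ _ _ (gF k) agF a1.
have hIG := hI_lem _ _ _ (gG k) agG a1.
have P0 : 0 <= \prod_(j <- s) C j by apply: prodr_ge0 => j _.
rewrite -RintegralZl; [|exact: mD|exact: hIG].
apply: le_Rintegral; [exact: mD|exact: hIF| |].
  apply: (eq_integrable mD _ _ _ (integrableZl mD (C k * \prod_(j <- s) C j) hIG)).
  by move=> r _ /=; rewrite EFinM.
move=> r /inD r0.
have [gFk [F0 _]] := gF k; have [gGk [G0 _]] := gG k.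
have [rx|xr] := leP r x; last first.
  rewrite P2F ?mulr0; last exact: lt_accr.
  by rewrite !mulr_ge0 // ?G0 // P1G // ge1M.
rewrite (_ : _ * (_ * _) = (C k * G k r) * ((\prod_(j <- s) C j) *
   prod_cdf_aux [seq G i | i <- s] (acc * (1 + r)) x)); last by rewrite !mulrA; congr (_ * _); rewrite -!mulrA; congr (_ * _); rewrite mulrC.
apply: ler_pM; [exact: F0 r r0|exact: P1F _ (ge1M _ _ a1 r0)|exact: FG|exact: IH _ (ge1M _ _ a1 r0)].
Qed.

End Aux.

Section Gamma.
Variable R : realType.
Local Notation D := ([set` `]0%R, +oo[] : set R).

Lemma gamma_good (x : R) (x1 : 1 < x) (a : nat) (b : R) : 0 < b -> @good R x (gamma_pdf a b).
Proof.
move=> b0; split; last split.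
- have mg : measurable_fun D (fun r : R => r ^+ a.-1 * expR (- r / b) / ((a.-1)`!%:R * b ^+ a)); last first.
    apply: eq_measurable_fun mg => r /[!inE] /inD r0.
    by rewrite /gamma_pdf r0.
  apply: measurable_funM; [apply: measurable_funM|exact: measurable_cst].
    exact: exprn_measurable.
  have mn : measurable_fun D (fun r : R => - r / b).
    apply: measurable_funM; last exact: measurable_cst.
    apply: measurable_funN; exact: measurable_id.
  exact: measurableT_comp (@measurable_expR R) mn.
- move=> r r0; rewrite /gamma_pdf r0.
  apply: mulr_ge0; [apply: mulr_ge0; [apply: exprn_ge0; exact: ltW|exact: expR_ge0]|].
  rewrite invr_ge0; apply: mulr_ge0; [exact: ler0n|apply: exprn_ge0; exact: ltW].
- exists (x ^+ a.-1 / ((a.-1)`!%:R * b ^+ a)) => r r0 rx.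
  rewrite /gamma_pdf r0; apply: ler_wpM2r.
    by rewrite invr_ge0 mulr_ge0 ?exprn_ge0 ?ltW.
  rewrite -[X in _ <= X]mulr1; apply: ler_pM.
  - apply: exprn_ge0; exact: ltW.
  - exact: expR_ge0.
  - apply: lerXn2r => //; rewrite nnegrE; apply: ltW => //; exact: lt_le_trans r0 rx.
  - rewrite expR_le1 mulNr oppr_le0; apply: divr_ge0; exact: ltW.
Qed.


Lemma gamma_cmp (x : R) (m l : nat) (b r : R) : (1 <= m)%N -> 0 < b -> 0 < r -> r <= x ->
  gamma_pdf (m + l) b r <= (x / b) ^+ l * gamma_pdf (m + 0) b r.
Proof.
move=> m1 b0 r0 rx; rewrite addn0 /gamma_pdf r0.
case: m m1 => // n _; rewrite addSn /=.
set E := expR (- r / b).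
have E0 : 0 <= E by exact: expR_ge0.
have bn0 : b != 0 by rewrite gt_eqF.
have F1 : ((n + l)`!%:R : R) != 0 by rewrite pnatr_eq0 -lt0n fact_gt0.
have F0 : ((n)`!%:R : R) != 0 by rewrite pnatr_eq0 -lt0n fact_gt0.
set K := r ^+ n * E / (b ^+ n.+1 * b ^+ l).
have K0 : 0 <= K.
  apply: mulr_ge0; [apply: mulr_ge0 => //; apply: exprn_ge0; exact: ltW|].
  by rewrite invr_ge0; apply: mulr_ge0; apply: exprn_ge0; exact: ltW.
have -> : r ^+ (n + l) * E / ((n + l)`!%:R * b ^+ (n + l).+1) =
    (r ^+ l / (n + l)`!%:R) * K.
  rewrite /K exprD -addSn exprD; field.
  by rewrite F1 /= !expf_neq0.
have -> : (x / b) ^+ l * (r ^+ n * E / (n`!%:R * b ^+ n.+1)) =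
    (x ^+ l / n`!%:R) * K.
  rewrite /K exprMn exprVn; field.
  by rewrite F0 /= !expf_neq0.
apply: ler_wpM2r => //.
apply: ler_pM.
- apply: exprn_ge0; exact: ltW.
- by rewrite invr_ge0 ler0n.
- apply: lerXn2r => //; rewrite nnegrE; apply: ltW => //; exact: lt_le_trans r0 rx.
- by rewrite lef_pV2 ?posrE ?ltr0n ?fact_gt0 // ler_nat leq_fact // leq_addr.
Qed.

End Gamma.

Theorem lemma2 (R : realType) (K m : nat) (hK : (1 <= K)%N) (hm : (1 <= m)%N)
  (sigma2 lambda theta : 'I_K -> R)
  (hsigma : forall k, 0 < sigma2 k)
  (hlambda : forall k, 0 <= lambda k < 1)
  (htheta : forall k, 0 < theta k)
  (hsum : \sum_(k < K) theta k = 1)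
  (x : R) (hx : 1 < x) (ell : 'I_K -> nat) (hell : exists k, ell k <> 0%N) :
  (fun gam : R => F_A m sigma2 lambda theta ell gam x /
                  F_A m sigma2 lambda theta (fun _ => 0%N) gam x)
    @ +oo --> 0.
Proof.
have [k0 hk0] := hell.
pose a k := theta k * sigma2 k * (1 - lambda k ^+ 2) / m%:R.
have a0 k : 0 < a k.
  have /andP [l0 l1] := hlambda k.
  apply: divr_gt0; last by rewrite ltr0n.
  apply: mulr_gt0; first exact: mulr_gt0.
  rewrite subr_gt0; nra.
have OmE gam k : Omega m sigma2 lambda theta gam k = gam * a k.
  by rewrite /Omega /a !mulrA.
have x0 : 0 < x by apply: lt_trans hx.
pose G0 := \sum_k x / a k.
have G0k k : x / a k <= G0.
  rewrite /G0 (bigD1 k) //= lerDl; apply: sumr_ge0 => i _.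
  by apply: divr_ge0; apply: ltW.
apply/cvgr0Pnorm_lt => eps eps0.
have e0 : 0 < x / (a k0 * eps) by apply: divr_gt0 => //; apply: mulr_gt0.
near=> gam.
have hg : G0 + x / (a k0 * eps) < gam.
  near: gam; apply: nbhs_pinfty_gt; exact: num_real.
have hgk k : x / a k < gam.
  by apply: le_lt_trans hg; apply: (le_trans (G0k k)); rewrite lerDl ltW.
have gam0 : 0 < gam.
  apply: le_lt_trans (hgk k0); by apply: divr_ge0; apply: ltW.
have Om0 k : 0 < Omega m sigma2 lambda theta gam k by rewrite OmE mulr_gt0.
have y1 k : 0 <= x / Omega m sigma2 lambda theta gam k <= 1.
  apply/andP; split; first by apply: divr_ge0; apply: ltW.
  rewrite ler_pdivrMr // mul1r OmE; apply: ltW.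
  by rewrite -ltr_pdivrMr // mulrC.
pose F k := gamma_pdf (m + ell k) (Omega m sigma2 lambda theta gam k).
pose G k := gamma_pdf (m + 0) (Omega m sigma2 lambda theta gam k).
pose C k := (x / Omega m sigma2 lambda theta gam k) ^+ ell k.
have gF k : @good R x (F k) by exact: gamma_good.
have gG k : @good R x (G k) by exact: gamma_good.
have C0 k : 0 <= C k by apply: exprn_ge0; case/andP: (y1 k).
have FG k r : 0 < r -> r <= x -> F k r <= C k * G k r.
  by move=> r0 rx; exact: gamma_cmp.
have main := @aux_cmp R x hx 'I_K F G C (enum 'I_K) gF gG C0 FG 1 (lexx 1).
have N0 : 0 <= F_A m sigma2 lambda theta ell gam x.
  have [P1 _] := @aux_props R x hx _ (@allgood_map R x _ F (enum 'I_K) gF).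
  exact: P1.
have D0 : 0 <= F_A m sigma2 lambda theta (fun _ => 0%N) gam x.
  have [P1 _] := @aux_props R x hx _ (@allgood_map R x _ G (enum 'I_K) gG).
  exact: P1.
have Pb : \prod_(k <- enum 'I_K) C k <= x / (gam * a k0).
  rewrite big_enum /= (bigD1 k0) //= -OmE.
  have [y0 y1'] := andP (y1 k0).
  apply: (@le_trans _ _ (C k0)).
    apply: ler_piMr => //; apply: prodr_ile1 => k _.
    have [z0 z1] := andP (y1 k); by rewrite exprn_ge0 // exprn_ile1.
  rewrite /C; case: (ell k0) hk0 => // l _.
  by rewrite exprS; apply: ler_piMr => //; rewrite exprn_ile1.
have Pe : x / (gam * a k0) < eps.
  have h : x / (a k0 * eps) < gam.
    by apply: le_lt_trans hg; rewrite lerDr; apply: sumr_ge0 => i _; apply: divr_ge0; apply: ltW.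
  have p1 : 0 < a k0 * eps by apply: mulr_gt0 => //; exact: a0.
  have p2 : 0 < gam * a k0 by apply: mulr_gt0 => //; exact: a0.
  move: h; rewrite (ltr_pdivrMr _ _ p1) (ltr_pdivrMr _ _ p2).
  have -> : eps * (gam * a k0) = gam * (a k0 * eps) by ring.
  by [].
rewrite ger0_norm ?divr_ge0 //.
have [->|Dn0] := eqVneq (F_A m sigma2 lambda theta (fun _ => 0%N) gam x) 0.
  by rewrite invr0 mulr0.
have Dp : 0 < F_A m sigma2 lambda theta (fun _ => 0%N) gam x by rewrite lt_def Dn0 D0.
apply: le_lt_trans Pe; apply: le_trans Pb.
by rewrite ler_pdivrMr //; exact: main.
Unshelve. all: end_near.
Qed.
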